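(* Let $g$ be a non-negative concave (differentiable) function on $(0,\infty)$ and fix $x>0$. Define $E(\alpha)=g(\alpha)\,g(x/\alpha)$ for $\alpha>0$. Suppose $\lim_{\alpha\to0^+}E(\alpha)=\lim_{\alpha\to+\infty}E(\alpha)=0$ and that $T_0(t)=t g'(t)/g(t)$ is one-to-one on $(0,\infty)$. Then $E$ attains its unique global maximum at $\alpha=\sqrt{x}$. *)

(* Defs.v *)
From Stdlib Require Import Reals.
From Coquelicot Require Import Coquelicot.
Open Scope R_scope.

Definition concave_on_pos (g : R -> R) : Prop :=
  forall a b t : R, 0 < a -> 0 < b -> 0 <= t <= 1 ->
    t * g a + (1 - t) * g b <= g (t * a + (1 - t) * b).

Definition Efun (g : R -> R) (x alpha : R) : R := g alpha * g (x / alpha).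

Definition T0 (g : R -> R) (t : R) : R := t * Derive g t / g t.

(* Main.v *)
Require Import Defs.
From Stdlib Require Import Reals.
From Coquelicot Require Import Coquelicot.
From Stdlib Require Import Lra.
Open Scope R_scope.

Lemma zero_all (g : R -> R) t0 :
  (forall t, 0 < t -> 0 <= g t) -> concave_on_pos g ->
  0 < t0 -> g t0 = 0 -> forall t, 0 < t -> g t = 0.
Proof.
  intros Hpos Hc Ht0 Hz t Ht.
  destruct (Rtotal_order t t0) as [Hlt|[Heq|Hgt]].
  - assert (H := Hc t (2*t0 - t) (1/2) Ht ltac:(lra) ltac:(lra)).
    replace (1/2 * t + (1 - 1/2) * (2*t0 - t)) with t0 in H by field.
    assert (H2 := Hpos (2*t0 - t) ltac:(lra)). specialize (Hpos t Ht). lra.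
  - subst; auto.
  - set (l := (t0/2)/(t - t0/2)).
    assert (Hl0 : 0 < l) by (unfold l; apply Rdiv_lt_0_compat; lra).
    assert (Hl1 : l < 1).
    { unfold l. apply (Rmult_lt_reg_r (t - t0/2)); [lra|].
      unfold Rdiv. rewrite Rmult_assoc, Rinv_l; lra. }
    assert (H := Hc t (t0/2) l Ht ltac:(lra) ltac:(lra)).
    replace (l * t + (1 - l) * (t0/2)) with t0 in H
      by (unfold l; field; lra).
    assert (H2 := Hpos (t0/2) ltac:(lra)). assert (H3 := Hpos t Ht).
    rewrite Hz in H.
    assert (l * g t <= 0) by nra.
    nra.
Qed.

Lemma g_pos (g : R -> R) :
  (forall t, 0 < t -> 0 <= g t) -> concave_on_pos g ->
  (forall s t, 0 < s -> 0 < t -> T0 g s = T0 g t -> s = t) ->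
  forall t, 0 < t -> 0 < g t.
Proof.
  intros Hpos Hc Hinj t Ht.
  destruct (Hpos t Ht) as [H|H]; auto.
  exfalso.
  assert (Z := zero_all g t Hpos Hc Ht (eq_sym H)).
  assert (1 = 2) as E; [|lra].
  apply Hinj; try lra.
  unfold T0. rewrite (Z 1), (Z 2) by lra. unfold Rdiv. rewrite Rinv_0. ring.
Qed.

Section Main.
Variable g : R -> R.
Variable x : R.
Hypothesis Hpos : forall t, 0 < t -> 0 <= g t.
Hypothesis Hc : concave_on_pos g.
Hypothesis Hd : forall t, 0 < t -> ex_derive g t.
Hypothesis Hx : 0 < x.
Hypothesis H0 : filterlim (Efun g x) (at_right 0) (locally 0).
Hypothesis Hinj : forall s t, 0 < s -> 0 < t -> T0 g s = T0 g t -> s = t.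

Definition DE c := Derive g c * g (x/c) + g c * (Derive g (x/c) * (- x / c^2)).

Lemma HD c : 0 < c -> is_derive (Efun g x) c (DE c).
Proof.
  intros Hc0. unfold Efun, DE.
  assert (Hq : is_derive (fun a => x / a) c (- x / c^2)).
  { auto_derive. lra. field. lra. }
  assert (H : 0 < x / c) by (apply Rdiv_lt_0_compat; lra).
  assert (Hg := Derive_correct g (x/c) (Hd _ H)).
  assert (K := is_derive_comp g (fun a => x / a) c _ _ Hg Hq).
  assert (Hg1 := Derive_correct g c (Hd _ Hc0)).
  assert (M := @is_derive_mult R_AbsRing _ _ c _ _ Hg1 K Rmult_comm).
  simpl in M. unfold mult, plus, scal in M; simpl in M.
  unfold mult in M; simpl in M.
  replace (Derive g c * g (x / c) + g c * (Derive g (x / c) * (- x / c ^ 2)))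
    with (Derive g c * g (x / c) + g c * (- x / (c * (c * 1)) * Derive g (x / c))) by (simpl; field; lra).
  exact M.
Qed.

Lemma Hcont c : 0 < c -> continuity_pt (Efun g x) c.
Proof.
  intros Hc0. apply derivable_continuous_pt.
  exists (DE c). apply is_derive_Reals. apply HD; auto.
Qed.

Lemma crit c : 0 < c -> DE c = 0 -> c = sqrt x.
Proof.
  intros Hc0 HE.
  assert (Hxc : 0 < x / c) by (apply Rdiv_lt_0_compat; lra).
  assert (G1 := g_pos g Hpos Hc Hinj c Hc0).
  assert (G2 := g_pos g Hpos Hc Hinj _ Hxc).
  assert (Heq : c = x / c).
  { apply Hinj; auto. unfold T0.
    unfold DE in HE.
    assert (c * Derive g c / g c - x / c * Derive g (x / c) / g (x / c)
            = (c / (g c * g (x/c))) * (Derive g c * g (x / c) + g c * (Derive g (x / c) * (- x / c ^ 2)))) by (field; lra).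
    rewrite HE, Rmult_0_r in H. lra. }
  assert (c * c = x) by (rewrite Heq at 1; field; lra).
  rewrite <- H. rewrite sqrt_square; lra.
Qed.

Lemma Epos a : 0 < a -> 0 < Efun g x a.
Proof.
  intros Ha. unfold Efun.
  apply Rmult_lt_0_compat; apply (g_pos g Hpos Hc Hinj); auto.
  apply Rdiv_lt_0_compat; lra.
Qed.

Lemma left_case a : 0 < a < sqrt x -> Efun g x a < Efun g x (sqrt x).
Proof.
  intros [Ha Has].
  assert (Hs : 0 < sqrt x) by lra.
  set (M := Efun g x (sqrt x)).
  assert (HM : 0 < M) by (apply Epos; auto).
  destruct (Rlt_or_le (Efun g x a) M) as [L|L]; auto.
  exfalso.
  assert (Hz : exists z, 0 < z <= a /\ Efun g x z = M).
  { destruct L as [L|L]; [|exists a; split; [lra|auto]].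
    pose proof (proj1 (filterlim_locally (F:=at_right 0) (Efun g x) 0) H0) as H1.
    destruct (H1 (mkposreal M HM)) as [d Hd0].
    set (y0 := Rmin (d/2) (a/2)).
    assert (Hy0 : 0 < y0) by (unfold y0; apply Rmin_glb_lt; destruct d; simpl; lra).
    assert (Hy1 : y0 < a) by (unfold y0; generalize (Rmin_r (d/2) (a/2)); lra).
    assert (Hy2 : y0 < d) by (unfold y0; generalize (Rmin_l (d/2) (a/2)); destruct d; simpl; lra).
    assert (B : ball 0 d y0).
    { unfold ball; simpl; unfold AbsRing_ball, abs, minus, plus, opp; simpl.
      rewrite Ropp_0, Rplus_0_r, Rabs_pos_eq; lra. }
    specialize (Hd0 y0 B Hy0).
    unfold ball in Hd0; simpl in Hd0; unfold AbsRing_ball, abs, minus, plus, opp in Hd0; simpl in Hd0.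
    rewrite Ropp_0, Rplus_0_r in Hd0.
    assert (Ey : Efun g x y0 < M) by (generalize (Rle_abs (Efun g x y0)); lra).
    destruct (Ranalysis5.IVT_interv (fun t => Efun g x t - M) y0 a) as [z [Hz1 Hz2]].
    - intros b Hb. apply continuity_pt_minus.
      + apply Hcont; lra.
      + apply continuity_pt_const. intros u v; reflexivity.
    - lra.
    - lra.
    - lra.
    - exists z. split; lra. }
  destruct Hz as [z [Hz1 Hz2]].
  assert (pr : forall c, z < c < sqrt x -> derivable_pt (Efun g x) c).
  { intros c Hc0. exists (DE c). apply is_derive_Reals. apply HD; lra. }
  destruct (Rolle (Efun g x) z (sqrt x) pr) as [c [P Hc0]].
  - intros c Hc1. apply Hcont; lra.
  - lra.
  - auto.
  - assert (DE c = 0).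
    { rewrite <- Hc0. destruct (pr c P) as [l Hl]. simpl.
      apply (uniqueness_limite (Efun g x) c); auto.
      apply is_derive_Reals. apply HD; lra. }
    apply crit in H; lra.
Qed.

End Main.

Theorem lemma20 (g : R -> R) (x : R) :
  (forall t, 0 < t -> 0 <= g t) ->
  concave_on_pos g ->
  (forall t, 0 < t -> ex_derive g t) ->
  0 < x ->
  filterlim (Efun g x) (at_right 0) (locally 0) ->
  filterlim (Efun g x) (Rbar_locally p_infty) (locally 0) ->
  (forall s t, 0 < s -> 0 < t -> T0 g s = T0 g t -> s = t) ->
  forall alpha, 0 < alpha -> alpha <> sqrt x ->
    Efun g x alpha < Efun g x (sqrt x).
Proof.
  intros Hpos Hc Hd Hx H0 Hinf Hinj a Ha Hne.
  assert (Hs : 0 < sqrt x) by (apply sqrt_lt_R0; auto).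
  destruct (Rtotal_order a (sqrt x)) as [L|[L|L]].
  - apply left_case; auto.
  - contradiction.
  - assert (E : Efun g x a = Efun g x (x / a)).
    { unfold Efun. replace (x / (x / a)) with a by (field; lra). ring. }
    rewrite E. apply left_case; auto. split.
    + apply Rdiv_lt_0_compat; lra.
    + assert (sqrt x * sqrt x = x) by (apply sqrt_sqrt; lra).
      apply (Rmult_lt_reg_r a); [lra|].
      unfold Rdiv. rewrite Rmult_assoc, Rinv_l by lra. nra.
Qed.
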